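(* Let $G$ be a connected graph with $q$ edges. Then $\chi_{la}(G)=2$ if and only if $G$ is bipartite with a bipartition $(V_1,V_2)$ such that (i) $G$ has at most one pendant vertex, and (ii) $G$ admits a local antimagic labeling $f$ such that every vertex $x\in V_1$ has $f^+(x)=\binom{q+1}{2}/|V_1|$ and every vertex $y\in V_2$ has $f^+(y)=\binom{q+1}{2}/|V_2|$, these two numbers being distinct integers.
   Context: For a connected graph $G=(V,E)$ with $q=|E|$, a local antimagic labeling is a bijection $f:E\to\{1,\dots,q\}$ such that for every pair of adjacent vertices $x,y$ we have $f^+(x)\ne f^+(y)$, where $f^+(x)=\sum f(e)$ over all edges $e$ incident to $x$. The color number $c(f)$ is the number of distinct values of $f^+$, and the local antimagic chromatic number $\chi_{la}(G)$ is the minimum of $c(f)$ over all local antimagic labelings $f$ of $G$. A pendant vertex is a vertex of degree $1$. *)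

(* Defs.v *)
From mathcomp Require Import all_boot.
Set Implicit Arguments. Unset Strict Implicit. Unset Printing Implicit Defensive.

Definition simple_graph (T : finType) (adj : rel T) : Prop :=
  symmetric adj /\ irreflexive adj.

Definition connected_graph (T : finType) (adj : rel T) : Prop :=
  forall x y : T, connect adj x y.

Definition edges (T : finType) (adj : rel T) : {set {set T}} :=
  [set e : {set T} | [exists x, exists y, adj x y && (e == [set x; y])]].

Definition deg (T : finType) (adj : rel T) (x : T) : nat := #|[set y | adj x y]|.

Definition pendant (T : finType) (adj : rel T) (x : T) : bool := deg adj x == 1.

Definition edge_labeling (T : finType) (adj : rel T) (f : {set T} -> nat) : Prop :=
  {in edges adj &, injective f} /\
  (forall e, e \in edges adj -> 1 <= f e <= #|edges adj|) /\
  (forall k, 1 <= k <= #|edges adj| -> exists2 e, e \in edges adj & f e = k).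

Definition fplus (T : finType) (adj : rel T) (f : {set T} -> nat) (x : T) : nat :=
  \sum_(e in edges adj | x \in e) f e.

Definition local_antimagic (T : finType) (adj : rel T) (f : {set T} -> nat) : Prop :=
  edge_labeling adj f /\ (forall x y, adj x y -> fplus adj f x != fplus adj f y).

Definition color_number (T : finType) (adj : rel T) (f : {set T} -> nat) : nat :=
  size (undup [seq fplus adj f x | x : T]).

Definition chi_la_is (T : finType) (adj : rel T) (k : nat) : Prop :=
  (exists f, local_antimagic adj f /\ color_number adj f = k) /\
  (forall f, local_antimagic adj f -> k <= color_number adj f).

Definition bipartition (T : finType) (adj : rel T) (V1 : {set T}) : Prop :=
  V1 != set0 /\ ~: V1 != set0 /\
  (forall x y, adj x y -> (x \in V1) != (y \in V1)).

(* Main.v *)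
Require Import Defs.
From mathcomp Require Import all_boot.
From mathcomp Require Import zify.
Set Implicit Arguments. Unset Strict Implicit.

Section S.
Variables (T : finType) (adj : rel T).

Lemma sum_labels f : edge_labeling adj f ->
  \sum_(e in edges adj) f e = 'C(#|edges adj|.+1, 2).
Proof.
case=> [inj [rng sur]].
rewrite -big_enum -(big_map f predT id).
have pe : perm_eq [seq f e | e <- enum (edges adj)] (iota 1 #|edges adj|).
  apply: uniq_perm.
  - rewrite map_inj_in_uniq ?enum_uniq // => x y; rewrite !mem_enum; exact: inj.
  - exact: iota_uniq.
  move=> k; rewrite mem_iota; apply/mapP/idP.
    by case=> e; rewrite mem_enum => /rng H ->; lia.
  move=> H; have [|e eE fe] := sur k; first by lia.
  by exists e; rewrite ?mem_enum.
rewrite (perm_big _ pe) -bin2_sum big_ltn // add0n.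
by rewrite /index_iota subSS subn0 -[in RHS]/(iota 1 _).
Qed.

Lemma edgeP e : e \in edges adj -> exists x y, adj x y /\ e = [set x; y].
Proof. by rewrite inE => /existsP [x /existsP [y /andP [a /eqP ->]]]; exists x, y. Qed.

Lemma edge_in x y : adj x y -> [set x; y] \in edges adj.
Proof. by move=> a; rewrite inE; apply/existsP; exists x; apply/existsP; exists y; rewrite a eqxx. Qed.

Lemma sum_side f (V1 : {set T}) :
  (forall x y, adj x y -> (x \in V1) != (y \in V1)) ->
  \sum_(x in V1) fplus adj f x = \sum_(e in edges adj) f e.
Proof.
move=> bip; rewrite /fplus.
under eq_bigr do rewrite big_mkcondr.
rewrite exchange_big /=; apply: eq_bigr => e /edgeP [x [y [a ->]]].
rewrite -big_mkcondr /= sum_nat_const.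
suff -> : #|[pred z in V1 | z \in [set x; y]]| = 1 by rewrite mul1n.
have := bip _ _ a.
case: (boolP (x \in V1)) => hx; case: (boolP (y \in V1)) => hy // _.
  rewrite -(cards1 x); apply: eq_card => z; rewrite !inE.
  case: (eqVneq z x) => [->|nx]; rewrite ?hx ?orbF ?andbT //=.
  by case: (eqVneq z y) => [->|]; rewrite ?andbF ?(negbTE hy).
rewrite -(cards1 y); apply: eq_card => z; rewrite !inE.
case: (eqVneq z y) => [->|ny]; rewrite ?hy ?orbT ?andbT ?orbF //=.
by case: (eqVneq z x) => [->|]; rewrite ?andbF ?(negbTE hx).
Qed.

Lemma pendant_fplus f x : simple_graph adj -> pendant adj x ->
  exists z, adj x z /\ fplus adj f x = f [set x; z].
Proof.
case=> sym irr; rewrite /pendant /deg => /cards1P [z hz].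
have axz : adj x z by have := set11 z; rewrite -hz inE.
exists z; split => //; rewrite /fplus -(big_pred1_eq (@addn : Monoid.law 0) [set x; z] f).
apply: eq_bigl => e; apply/andP/eqP.
  case=> /edgeP [a [b [ab ->]]]; rewrite !inE => /orP [] /eqP ex; subst.
    have : b \in [set z] by rewrite -hz inE.
    by move=> /set1P ->.
  have : a \in [set z] by rewrite -hz inE sym.
  by move=> /set1P ->; rewrite setUC.
by move=> ->; rewrite edge_in // !inE eqxx.
Qed.

Section Conn.
Variable r : T.
Hypothesis conn : forall v, connect adj r v.
Definition Pk v k := [exists p : k.-tuple T, path adj r p && (last r p == v)].
Lemma exPk v : exists k, Pk v k.
Proof.
have /connectP [p pp lp] := conn v.
exists (size p); apply/existsP; exists (in_tuple p); by rewrite /= pp lp eqxx.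
Qed.
Definition dist v := ex_minn (exPk v).

Lemma dist_par v : v != r -> exists w, adj w v && (dist w < dist v).
Proof.
move=> nv; rewrite /dist; case: ex_minnP => m /existsP [p /andP [pp /eqP lp]] _.
move: (tval p) (size_tuple p) pp lp => {p} s.
case/lastP: s => [|s u] /=.
  by move=> _ _ vr; rewrite vr eqxx in nv.
rewrite size_rcons rcons_path last_rcons => sm /andP [ps au] uv.
exists (last r s); rewrite -uv au /=.
case: ex_minnP => m' _ /(_ (size s)) H.
have : m' <= size s by apply: H; apply/existsP; exists (in_tuple s); rewrite /= ps eqxx.
by rewrite -sm.
Qed.
Lemma card_bound : symmetric adj -> #|T| <= #|edges adj|.+1.
Proof.
move=> sym.
pose par v := odflt v [pick w | adj w v && (dist w < dist v)].
have parP v : v != r -> adj (par v) v && (dist (par v) < dist v).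
  move=> nv; rewrite /par; case: pickP => [w //|/= H].
  by have [w] := dist_par nv; rewrite H.
pose h v := [set v; par v].
have hinj : {in [set~ r] &, injective h}.
  move=> v v'; rewrite !inE => nv nv' e.
  have /andP [_ d1] := parP _ nv; have /andP [_ d2] := parP _ nv'.
  case: (eqVneq v v') => // ne.
  have : v \in h v' by rewrite -e /h !inE eqxx.
  rewrite /h !inE (negbTE ne) /= => /eqP E1.
  have : v' \in h v by rewrite e /h !inE eqxx.
  rewrite /h !inE eq_sym (negbTE ne) /= => /eqP E2.
  by rewrite -E1 -E2 in d1 d2; move: (ltn_trans d1 d2); rewrite ltnn.
have := card_in_imset hinj; rewrite cardsC1 => E.
have : #|[set h x | x in [set~ r]]| <= #|edges adj|.
  apply: subset_leq_card; apply/subsetP => e /imsetP [v]; rewrite in_setC1 => nv ->.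
  have /andP [a _] := parP _ nv; apply: (@edge_in v (par v)); by rewrite sym.
rewrite E; case: #|T| => //.
Qed.
End Conn.
End S.
Lemma bin2db n : ('C(n.+1, 2)).*2 = n.+1 * n.
Proof. elim: n => // n IH; rewrite binS bin1 doubleD IH; lia. Qed.
Lemma ar q a b n1 n2 S : a != b -> a <= q -> b <= q -> n1 * a = S -> n2 * b = S -> S.*2 = q.+1 * q -> n1 + n2 <= q.+1 -> False.
Proof.
move=> nab aq bq e1 e2 eS nn.
wlog lt : a b n1 n2 nab aq bq e1 e2 nn / a < b.
  move=> W; case: (ltngtP a b) => h; first exact: (W a b n1 n2).
  - apply: (W b a n2 n1) => //; by [rewrite eq_sym | lia].
  - by rewrite h eqxx in nab.
have q0 : 0 < q by lia.
have h1 : q * q.+1 <= q * (2 * n2) by nia.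
rewrite leq_pmul2l // in h1.
have h2 : 2 * n1 <= q.+1 by lia.
have h3 : q.+1 * q <= 2 * n1 * q.-1 by nia.
have h4 : 2 * n1 * q.-1 <= q.+1 * q.-1 by rewrite leq_mul2r h2 orbT.
nia.
Qed.

Theorem mainTheorem3 (T : finType) (adj : rel T) :
  simple_graph adj -> connected_graph adj ->
  chi_la_is adj 2 <->
  exists V1 : {set T},
    bipartition adj V1 /\
    #|[set x | pendant adj x]| <= 1 /\
    let q := #|edges adj| in
    let V2 := ~: V1 in
    #|V1| %| 'C(q.+1, 2) /\ #|V2| %| 'C(q.+1, 2) /\
    'C(q.+1, 2) %/ #|V1| != 'C(q.+1, 2) %/ #|V2| /\
    exists f, local_antimagic adj f /\
      (forall x, x \in V1 -> fplus adj f x = 'C(q.+1, 2) %/ #|V1|) /\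
      (forall y, y \in V2 -> fplus adj f y = 'C(q.+1, 2) %/ #|V2|).
Proof.
move=> [sym irr] conn; split.
- case=> [[f [[lab anti] c2]] _].
  move: c2; rewrite /color_number.
  set s := [seq fplus adj f x | x : T].
  case E: (undup s) => [|a [|b []]] // _.
  have : uniq [:: a; b] by rewrite -E undup_uniq.
  rewrite /= inE andbT => nab.
  have memx x : fplus adj f x = a \/ fplus adj f x = b.
    have : fplus adj f x \in undup s by rewrite mem_undup; apply: map_f; rewrite mem_enum.
    by rewrite E !inE => /orP [] /eqP; [left|right].
  have : a \in undup s by rewrite E inE eqxx.
  rewrite mem_undup => /mapP [xa _ ea].
  have : b \in undup s by rewrite E !inE eqxx orbT.
  rewrite mem_undup => /mapP [xb _ eb].
  pose V1 := [set x | fplus adj f x == a].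
  have hV1 x : x \in V1 -> fplus adj f x = a by rewrite inE => /eqP.
  have hV2 x : x \in ~: V1 -> fplus adj f x = b.
    rewrite !inE; case: (memx x) => ->; by rewrite ?eqxx.
  have bip : forall x y, adj x y -> (x \in V1) != (y \in V1).
    move=> x y axy; have := anti _ _ axy; rewrite !inE.
    by case: (memx x) => ->; case: (memx y) => ->; rewrite ?eqxx // eq_sym; case: (a == b).
  have bip2 : forall x y, adj x y -> (x \in ~: V1) != (y \in ~: V1).
    move=> x y axy; rewrite !in_setC; have := bip _ _ axy; by case: (x \in V1); case: (y \in V1).
  set q := #|edges adj|.
  have e1 : #|V1| * a = 'C(q.+1, 2).
    rewrite -(sum_labels lab) -(sum_side f bip) -sum_nat_const.
    by apply: eq_bigr => x /hV1.
  have e2 : #|~: V1| * b = 'C(q.+1, 2).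
    rewrite -(sum_labels lab) -(sum_side f bip2) -sum_nat_const.
    by apply: eq_bigr => x /hV2.
  have xa1 : xa \in V1 by rewrite inE -ea.
  have xb2 : xb \in ~: V1 by rewrite !inE -eb eq_sym.
  have n1 : 0 < #|V1| by apply/card_gt0P; exists xa.
  have n2 : 0 < #|~: V1| by apply/card_gt0P; exists xb.
  have q1 : 'C(q.+1, 2) %/ #|V1| = a by rewrite -e1 mulKn.
  have q2 : 'C(q.+1, 2) %/ #|~: V1| = b by rewrite -e2 mulKn.
  exists V1; split.
    split; first by apply/set0Pn; exists xa.
    by split; first by apply/set0Pn; exists xb.
  split; last first.
    rewrite /= q1 q2; split; first by rewrite -e1 dvdn_mulr.
    split; first by rewrite -e2 dvdn_mulr.
    split => //; exists f; split; first by [].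
    by split; [exact: hV1 | exact: hV2].
  rewrite leqNgt; apply/negP => /card_gt1P [u [v [pu pv nuv]]].
  rewrite !inE in pu pv.
  have [zu [au fu]] := pendant_fplus f (conj sym irr) pu.
  have [zv [av fv]] := pendant_fplus f (conj sym irr) pv.
  have [lab1 [lab2 lab3]] := lab.
  case: (eqVneq (fplus adj f u) (fplus adj f v)) => euv.
    have : [set u; zu] = [set v; zv].
      by apply: lab1; rewrite ?edge_in // -fu -fv.
    move=> ES.
    have : u \in [set v; zv] by rewrite -ES !inE eqxx.
    rewrite !inE (negbTE nuv) /= => /eqP uzv.
    by have := anti _ _ av; rewrite -uzv euv eqxx.
  have bu : fplus adj f u <= q by rewrite fu; have /andP [] := lab2 _ (edge_in au).
  have bv : fplus adj f v <= q by rewrite fv; have /andP [] := lab2 _ (edge_in av).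
  have cb := card_bound (conn u) sym; rewrite -(cardsC V1) in cb.
  have ab : a <= q /\ b <= q.
    by case: (memx u) (memx v) euv bu bv => ->; case=> -> //; rewrite eqxx.
  case: ab => aq bq.
  exact: (ar nab aq bq e1 e2 (bin2db q) cb).
- case=> V1 [[ne1 [ne2 bip]] [_ [d1 [d2 [neq [f [anti [h1 h2]]]]]]]].
  set q := #|edges adj| in d1 d2 neq h1 h2.
  have [x1 x1V] := set0Pn _ ne1.
  have [x2 x2V] := set0Pn _ ne2.
  split.
    exists f; split => //; rewrite /color_number.
    set a := 'C(q.+1, 2) %/ #|V1| in neq h1.
    set b := 'C(q.+1, 2) %/ #|~: V1| in neq h2.
    suff /perm_size -> : perm_eq (undup [seq fplus adj f x | x : T]) [:: a; b] by [].
    apply: uniq_perm; rewrite ?undup_uniq //= ?inE ?neq // => z.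
    rewrite mem_undup !inE; apply/mapP/idP.
      case=> x _ ->; case: (boolP (x \in V1)) => hx.
        by rewrite h1 ?eqxx.
      by rewrite h2 ?eqxx ?orbT // inE.
    case/orP => /eqP ->; [exists x1; rewrite ?mem_enum ?h1 // | exists x2; rewrite ?mem_enum ?h2 //].
  move=> g [_ antig]; rewrite /color_number.
  have nx : x1 != x2 by apply/eqP => E; rewrite -E inE x1V in x2V.
  have /connectP [p pp lp] := conn x1 x2.
  case: p pp lp => [_ /= E | z p /= /andP [az _] _]; first by rewrite E eqxx in nx.
  have := uniq_leq_size (s1 := [:: fplus adj g x1; fplus adj g z]) (s2 := undup [seq fplus adj g x | x : T]).
  apply => [|w]; first by rewrite /= inE andbT antig.
  rewrite !inE mem_undup => /orP [] /eqP ->; apply: map_f; by rewrite mem_enum.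
Qed.
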